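(* A function $g\in\mathcal{G}$ is slow-jumping if and only if there exists a sub-polynomial function $h$ such that for all positive integers $x<y$ we have $g(y)\le \lfloor y/x\rfloor^2\, h(\lfloor y/x\rfloor x)\, g(x)$.
   Context: $\mathcal{G}=\{g:\mathbb{Z}_{\ge0}\to\mathbb{R}: g(0)=0,\ g(1)=1,\ g(x)>0\ \forall x>0\}$. A function $f:\mathbb{R}_{\ge0}\to\mathbb{R}_{\ge0}$ is sub-polynomial if for every $\alpha>0$, $\lim_{x\to\infty}x^\alpha f(x)=\infty$ and $\lim_{x\to\infty}x^{-\alpha}f(x)=0$. $g$ is slow-jumping if for every $\alpha>0$ there is $N>0$ such that for all positive integers $x<y$ with $y\ge N$, $g(y)\le \lfloor y/x\rfloor^{2+\alpha}x^\alpha g(x)$. *)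

(* Defs.v *)
From Stdlib Require Import Reals Lra Lia.
Open Scope R_scope.

Definition in_G (g : nat -> R) : Prop :=
  g 0%nat = 0 /\ g 1%nat = 1 /\ forall x : nat, (0 < x)%nat -> 0 < g x.

Definition tends_to_pinfty (F : R -> R) : Prop :=
  forall M : R, exists N : R, forall x : R, N <= x -> M <= F x.

Definition tends_to_zero (F : R -> R) : Prop :=
  forall eps : R, 0 < eps -> exists N : R, forall x : R, N <= x -> Rabs (F x) < eps.

(* f : R_{>=0} -> R_{>=0} is sub-polynomial.  f is given as a total function
   R -> R; only its values on [0, +oo) matter, and these are required to be
   nonnegative.  x^alpha is Rpower x alpha (only used for large x > 0). *)
Definition sub_polynomial (f : R -> R) : Prop :=
  (forall x : R, 0 <= x -> 0 <= f x) /\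
  forall alpha : R, 0 < alpha ->
    tends_to_pinfty (fun x => Rpower x alpha * f x) /\
    tends_to_zero (fun x => Rpower x (- alpha) * f x).

(* slow-jumping: for every alpha > 0 there is N > 0 such that for all positive
   integers x < y with y >= N, g(y) <= floor(y/x)^(2+alpha) * x^alpha * g(x).
   floor(y/x) for positive integers is the nat division y / x. *)
Definition slow_jumping (g : nat -> R) : Prop :=
  forall alpha : R, 0 < alpha ->
    exists N : R, 0 < N /\
      forall x y : nat, (0 < x)%nat -> (x < y)%nat -> N <= INR y ->
        g y <= Rpower (INR (Nat.div y x)) (2 + alpha) * Rpower (INR x) alpha * g x.

(* Main.v *)
Require Import Defs.
From Stdlib Require Import Reals Lra Lia.
Open Scope R_scope.

Lemma rp_pos x a : 0 < Rpower x a.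
Proof. unfold Rpower; apply exp_pos. Qed.

Lemma rp_large a M : 0 < a -> exists N, 0 < N /\ forall t, N <= t -> M <= Rpower t a.
Proof.
  intros Ha. exists (Rpower (Rmax M 1) (/ a)). split; [apply rp_pos|].
  intros t Ht.
  assert (Hp := rp_pos (Rmax M 1) (/a)).
  apply Rle_trans with (Rpower (Rpower (Rmax M 1) (/ a)) a).
  - rewrite Rpower_mult, Rinv_l by lra. rewrite Rpower_1.
    + apply Rmax_l.
    + apply Rlt_le_trans with 1; [lra| apply Rmax_r].
  - apply Rle_Rpower_l; lra.
Qed.

Lemma rp_small a e : 0 < a -> 0 < e -> exists N, 0 < N /\ forall t, N <= t -> Rpower t (- a) <= e.
Proof.
  intros Ha He. destruct (rp_large a (/ e) Ha) as [N [HN H]].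
  exists N; split; auto. intros t Ht. rewrite Rpower_Ropp.
  specialize (H t Ht).
  rewrite <- (Rinv_inv e). apply Rinv_le_contravar; auto.
  apply Rinv_0_lt_compat; auto.
Qed.

Fixpoint maxr (n : nat) (f : nat -> R) : R :=
  match n with O => 0 | S k => Rmax (maxr k f) (f k) end.

Lemma maxr_ge n f i : (i < n)%nat -> f i <= maxr n f.
Proof.
  induction n; intros H; [lia|]. simpl.
  destruct (Nat.eq_dec i n).
  - subst. apply Rmax_r.
  - apply Rle_trans with (maxr n f); [apply IHn; lia | apply Rmax_l].
Qed.

Lemma maxr_le n f B : 0 <= B -> (forall i, (i < n)%nat -> f i <= B) -> maxr n f <= B.
Proof.
  intros HB; induction n; intros H; simpl; auto.
  apply Rmax_lub; auto.
Qed.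

Definition ratio (g : nat -> R) (x y : nat) : R := g y / ((INR (Nat.div y x)) ^ 2 * g x).

Definition Hk (g : nat -> R) (k : nat) : R :=
  Rmax 1 (maxr (2 * k) (fun y => maxr (2 * k) (fun x =>
    if ((0 <? x)%nat && (x <? y)%nat && ((Nat.div y x) * x <? k)%nat)%bool then ratio g x y else 0))).

Definition hfun (g : nat -> R) (t : R) : R := Hk g (Z.to_nat (up t)).

Lemma divfacts x y : (0 < x)%nat -> (x < y)%nat ->
  (1 <= y / x /\ x <= (Nat.div y x) * x /\ (Nat.div y x) * x <= y /\ y < (Nat.div y x) * x + x)%nat.
Proof.
  intros Hx Hy. pose proof (Nat.div_mod_eq y x) as E.
  pose proof (Nat.mod_upper_bound y x ltac:(lia)) as M.
  set (q := Nat.div y x) in *. set (r := Nat.modulo y x) in *.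
  assert (1 <= q)%nat.
  { destruct q; [|lia]. lia. }
  nia.
Qed.

Lemma Hk_ge g k x y : (0 < x)%nat -> (x < y)%nat -> ((Nat.div y x) * x < k)%nat ->
  ratio g x y <= Hk g k.
Proof.
  intros Hx Hy Hk0. destruct (divfacts x y Hx Hy) as [H1 [H2 [H3 H4]]].
  unfold Hk. eapply Rle_trans; [|apply Rmax_r].
  eapply Rle_trans; [|apply (maxr_ge _ _ y); lia]. simpl.
  eapply Rle_trans; [|apply (maxr_ge _ _ x); lia]. simpl.
  replace ((0 <? x)%nat && (x <? y)%nat && (Nat.div y x * x <? k)%nat)%bool with true.
  - apply Rle_refl.
  - symmetry. apply andb_true_intro; split; [apply andb_true_intro; split|];
      apply Nat.ltb_lt; lia.
Qed.

Lemma Hk_le g k B : 1 <= B ->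
  (forall x y, (0 < x)%nat -> (x < y)%nat -> ((Nat.div y x) * x < k)%nat -> ratio g x y <= B) ->
  Hk g k <= B.
Proof.
  intros HB H. unfold Hk. apply Rmax_lub; auto.
  apply maxr_le; [lra|]. intros y _. apply maxr_le; [lra|]. intros x _.
  destruct ((0 <? x)%nat && (x <? y)%nat && (Nat.div y x * x <? k)%nat)%bool eqn:E; [|lra].
  apply andb_prop in E as [E E3]. apply andb_prop in E as [E1 E2].
  apply Nat.ltb_lt in E1, E2, E3. auto.
Qed.

Lemma Hk_ge1 g k : 1 <= Hk g k.
Proof. apply Rmax_l. Qed.

Lemma up_nat m : Z.to_nat (up (INR m)) = S m.
Proof.
  rewrite <- (up_tech (INR m) (Z.of_nat m)).
  - lia.
  - rewrite INR_IZR_INZ. lra.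
  - rewrite plus_IZR, <- INR_IZR_INZ. lra.
Qed.

Theorem proposition16 (g : nat -> R) (Hg : in_G g) :
  slow_jumping g <->
  exists h : R -> R, sub_polynomial h /\
    forall x y : nat, (0 < x)%nat -> (x < y)%nat ->
      g y <= INR (Nat.div y x) ^ 2 * h (INR (Nat.div y x * x)) * g x.
Proof.
  destruct Hg as [Hg0 [Hg1 Hgp]].
  split.
  - intros SJ. exists (hfun g). split.
    + split.
      * intros t _. unfold hfun. pose proof (Hk_ge1 g (Z.to_nat (up t))). lra.
      * intros alpha Ha. split.
        -- intros M. destruct (rp_large alpha M Ha) as [N [HN H]].
           exists N. intros t Ht. specialize (H t Ht).
           pose proof (Hk_ge1 g (Z.to_nat (up t))). pose proof (rp_pos t alpha).
           unfold hfun. nra.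
        -- intros eps He.
           set (beta := alpha / 2).
           assert (Hb : 0 < beta) by (unfold beta; lra).
           destruct (SJ beta Hb) as [N0 [HN0 SJb]].
           set (K0 := Z.to_nat (up N0)).
           set (C := Hk g K0).
           assert (HC : 1 <= C) by apply Hk_ge1.
           assert (Hbound : forall k, Hk g k <= C + Rpower (INR k) beta).
           { intros k. apply Hk_le.
             - pose proof (rp_pos (INR k) beta). lra.
             - intros x y Hx Hy Hk0.
               destruct (divfacts x y Hx Hy) as [H1 [H2 [H3 H4]]].
               pose proof (rp_pos (INR k) beta).
               destruct (Rle_lt_dec N0 (INR y)) as [Hy0|Hy0].
               + specialize (SJb x y Hx Hy Hy0).
                 assert (Hq : 0 < INR (Nat.div y x)) by (apply lt_0_INR; lia).
                 assert (Hxr : 0 < INR x) by (apply lt_0_INR; lia).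
                 assert (Hgx : 0 < g x) by (apply Hgp; lia).
                 rewrite Rpower_plus in SJb.
                 replace 2 with (INR 2) in SJb by (simpl; ring).
                 rewrite Rpower_pow in SJb by auto.
                 assert (E : Rpower (INR (Nat.div y x)) beta * Rpower (INR x) beta
                           = Rpower (INR (Nat.div y x * x)) beta).
                 { rewrite Rpower_mult_distr by auto. rewrite mult_INR. reflexivity. }
                 assert (Hle : Rpower (INR (Nat.div y x * x)) beta <= Rpower (INR k) beta).
                 { apply Rle_Rpower_l; [lra|]. split.
                   - apply lt_0_INR; lia.
                   - apply le_INR; lia. }
                 unfold ratio.
                 apply Rle_trans with (Rpower (INR k) beta); [|lra].
                 apply Rle_trans with (Rpower (INR (Nat.div y x * x)) beta); auto.
                 rewrite <- E. apply Rmult_le_reg_r with (INR (Nat.div y x) ^ 2 * g x).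
                 { apply Rmult_lt_0_compat; auto. apply pow_lt; auto. }
                 unfold Rdiv. rewrite Rmult_assoc, Rinv_l.
                 2:{ apply Rgt_not_eq. apply Rmult_lt_0_compat; auto. apply pow_lt; auto. }
                 replace (Rpower (INR (Nat.div y x)) beta * Rpower (INR x) beta *
                   (INR (Nat.div y x) ^ 2 * g x)) with
                   (INR (Nat.div y x) ^ 2 * Rpower (INR (Nat.div y x)) beta * Rpower (INR x) beta * g x) by ring.
                 lra.
               + assert (Hlt : (Nat.div y x * x < K0)%nat).
                 { assert (A : INR (Nat.div y x * x) < IZR (up N0)).
                   { pose proof (archimed N0) as [A _].
                     apply Rle_lt_trans with (INR y); [apply le_INR; lia|lra]. }
                   rewrite INR_IZR_INZ in A. apply lt_IZR in A. unfold K0. lia. }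
                 pose proof (Hk_ge g K0 x y Hx Hy Hlt). fold C in H0. lra. }
           assert (H2b : 0 < Rpower 2 beta) by apply rp_pos.
           destruct (rp_small alpha (eps / (3 * C)) Ha) as [N1 [HN1 S1]].
           { apply Rdiv_lt_0_compat; lra. }
           destruct (rp_small beta (eps / (3 * Rpower 2 beta)) Hb) as [N2 [HN2 S2]].
           { apply Rdiv_lt_0_compat; lra. }
           exists (Rmax 1 (Rmax N1 N2)). intros t Ht.
           pose proof (Rmax_l 1 (Rmax N1 N2)). pose proof (Rmax_r 1 (Rmax N1 N2)).
           pose proof (Rmax_l N1 N2). pose proof (Rmax_r N1 N2).
           specialize (S1 t ltac:(lra)). specialize (S2 t ltac:(lra)).
           assert (Ht0 : 0 < t) by lra.
           pose proof (rp_pos t (- alpha)) as Pa.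
           pose proof (Hk_ge1 g (Z.to_nat (up t))).
           unfold hfun. rewrite Rabs_pos_eq by nra.
           specialize (Hbound (Z.to_nat (up t))).
           pose proof (archimed t) as [A1 A2].
           assert (Eup : INR (Z.to_nat (up t)) = IZR (up t)).
           { rewrite INR_IZR_INZ. f_equal. apply Znat.Z2Nat.id.
             apply le_IZR. lra. }
           rewrite Eup in Hbound.
           assert (Hp : Rpower (IZR (up t)) beta <= Rpower 2 beta * Rpower t beta).
           { rewrite Rpower_mult_distr by lra. apply Rle_Rpower_l; lra. }
           assert (Eb : Rpower t (- alpha) * Rpower t beta = Rpower t (- beta)).
           { rewrite <- Rpower_plus. f_equal. unfold beta. lra. }
           apply Rle_lt_trans with (Rpower t (-alpha) * (C + Rpower 2 beta * Rpower t beta)).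
           { apply Rmult_le_compat_l; lra. }
           replace (Rpower t (-alpha) * (C + Rpower 2 beta * Rpower t beta))
             with (C * Rpower t (-alpha) + Rpower 2 beta * (Rpower t (- alpha) * Rpower t beta)) by ring.
           rewrite Eb.
           assert (C * Rpower t (- alpha) <= eps / 3).
           { apply Rle_trans with (C * (eps / (3 * C))).
             - apply Rmult_le_compat_l; lra.
             - right. field. lra. }
           assert (Rpower 2 beta * Rpower t (- beta) <= eps / 3).
           { apply Rle_trans with (Rpower 2 beta * (eps / (3 * Rpower 2 beta))).
             - apply Rmult_le_compat_l; lra.
             - right. field. lra. }
           lra.
    + intros x y Hx Hy.
      destruct (divfacts x y Hx Hy) as [H1 [H2 [H3 H4]]].
      assert (Hq : 0 < INR (Nat.div y x)) by (apply lt_0_INR; lia).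
      assert (Hgx : 0 < g x) by (apply Hgp; lia).
      assert (HD : 0 < INR (Nat.div y x) ^ 2 * g x) by (apply Rmult_lt_0_compat; auto; apply pow_lt; auto).
      unfold hfun. rewrite up_nat.
      pose proof (Hk_ge g (S (Nat.div y x * x)) x y Hx Hy ltac:(lia)) as HH.
      unfold ratio in HH.
      replace (g y) with (g y / (INR (Nat.div y x) ^ 2 * g x) * (INR (Nat.div y x) ^ 2 * g x))
        by (field; lra).
      replace (INR (Nat.div y x) ^ 2 * Hk g (S (Nat.div y x * x)) * g x)
        with (Hk g (S (Nat.div y x * x)) * (INR (Nat.div y x) ^ 2 * g x)) by ring.
      apply Rmult_le_compat_r; lra.
  - intros [h [[Hh0 Hh] Hineq]] alpha Ha.
    destruct (Hh alpha Ha) as [_ Hz].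
    destruct (Hz 1 ltac:(lra)) as [N0 HN0].
    set (N1 := Rmax N0 1).
    exists (2 * N1). split; [unfold N1; pose proof (Rmax_r N0 1); lra|].
    intros x y Hx Hy Hy0.
    destruct (divfacts x y Hx Hy) as [H1 [H2 [H3 H4]]].
    assert (Hq : 0 < INR (Nat.div y x)) by (apply lt_0_INR; lia).
    assert (Hxr : 0 < INR x) by (apply lt_0_INR; lia).
    assert (Hgx : 0 < g x) by (apply Hgp; lia).
    set (m := (Nat.div y x * x)%nat) in *.
    assert (Hm : INR y < 2 * INR m).
    { replace (2 * INR m) with (INR (2 * m)) by (rewrite mult_INR; simpl; ring).
      apply lt_INR; lia. }
    assert (HmN : N0 <= INR m /\ 0 < INR m).
    { unfold N1 in Hy0. pose proof (Rmax_l N0 1). pose proof (Rmax_r N0 1). lra. }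
    specialize (HN0 (INR m) (proj1 HmN)).
    pose proof (rp_pos (INR m) alpha) as Pm.
    assert (Hhm : h (INR m) <= Rpower (INR m) alpha).
    { pose proof (Hh0 (INR m) ltac:(lra)).
      rewrite Rpower_Ropp in HN0. rewrite Rabs_pos_eq in HN0.
      2:{ apply Rmult_le_pos; auto. left. apply Rinv_0_lt_compat; auto. }
      apply Rmult_lt_compat_l with (r := Rpower (INR m) alpha) in HN0; auto.
      rewrite <- Rmult_assoc, Rinv_r in HN0 by lra. lra. }
    apply Rle_trans with (INR (Nat.div y x) ^ 2 * h (INR m) * g x); [apply Hineq; auto|].
    rewrite Rpower_plus.
    replace (Rpower (INR (Nat.div y x)) 2) with (Rpower (INR (Nat.div y x)) (INR 2)) by (f_equal; simpl; ring).
    rewrite Rpower_pow by auto.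
    assert (E : Rpower (INR (Nat.div y x)) alpha * Rpower (INR x) alpha = Rpower (INR m) alpha).
    { rewrite Rpower_mult_distr by auto. unfold m. rewrite mult_INR. reflexivity. }
    replace (INR (Nat.div y x) ^ 2 * Rpower (INR (Nat.div y x)) alpha * Rpower (INR x) alpha * g x)
      with (INR (Nat.div y x) ^ 2 * (Rpower (INR (Nat.div y x)) alpha * Rpower (INR x) alpha) * g x) by ring.
    rewrite E. apply Rmult_le_compat_r; [lra|]. apply Rmult_le_compat_l; [|auto].
    apply pow_le; lra.
Qed.
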